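(* Let $\Bbbk$ be a unital ring and $n,r$ positive integers. If $r\ge n$ then $\Phi_{n,r}:\Bbbk W_n\to\operatorname{End}_\Bbbk(\mathbf V^{\otimes r})$ is faithful. If $r+1\ge n$ then $\Phi_{n,r+1/2}:\Bbbk W_{n-1}\to\operatorname{End}_\Bbbk(\mathbf V^{\otimes r}\otimes\mathbf v_n)$ is faithful.
   Context: $\mathbf V$ is a free $\Bbbk$-module with basis $\mathbf v_1,\dots,\mathbf v_n$. $W_n$ is the symmetric group on $\{1,\dots,n\}$ acting on $\mathbf V^{\otimes r}$ by $w(\mathbf v_{j_1}\otimes\cdots\otimes\mathbf v_{j_r})=\mathbf v_{w(j_1)}\otimes\cdots\otimes\mathbf v_{w(j_r)}$ extended linearly; $\Phi_{n,r}$ is the resulting representation. $W_{n-1}=\{w\in W_n:w(n)=n\}$ preserves $\mathbf V^{\otimes r}\otimes\mathbf v_n\subset\mathbf V^{\otimes(r+1)}$, and $\Phi_{n,r+1/2}$ is the resulting representation. *)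

(* Defs.v *)
From mathcomp Require Import all_boot all_order all_algebra all_fingroup.
Set Implicit Arguments. Unset Strict Implicit. Unset Printing Implicit Defensive.
Import GRing.Theory.
Local Open Scope ring_scope.

(* Basis of V^{(x) r}: the simple tensors v_{j_1} (x) ... (x) v_{j_r},
   indexed by functions j : 'I_r -> 'I_n (index i = v_{i+1}).
   Since the index set is finite, V^{(x) r} is identified with the free
   module of coordinate vectors over that basis. *)
Definition tensor_space (R : pzRingType) (n r : nat) :=
  {ffun {ffun 'I_r -> 'I_n} -> R}.

(* action of w in W_n = 'S_n:  w . e_j = e_{w o j}, i.e. on coordinates
   (w . x)(k) = x (w^-1 o k). *)
Definition perm_act (R : pzRingType) (n r : nat) (w : 'S_n)
  (x : tensor_space R n r) : tensor_space R n r :=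
  [ffun k : {ffun 'I_r -> 'I_n} => x [ffun i => (w^-1)%g (k i)]].

(* Elements of the group algebra k W_n: coefficient functions 'S_n -> k.
   Phi a is the linear extension of the action. *)
Definition Phi (R : pzRingType) (n r : nat) (a : {ffun 'S_n -> R})
  (x : tensor_space R n r) : tensor_space R n r :=
  [ffun k => \sum_(w : 'S_n) a w * perm_act w x k].

(* W_{n-1} = stabiliser of the last point n (index n-1). *)
Definition fixes_last (n : nat) (w : 'S_n) : Prop :=
  forall i : 'I_n, val i = n.-1 -> w i = i.

(* the embedding V^{(x) r} -> V^{(x) (r+1)}, x |-> x (x) v_n *)
Definition tensor_vn (R : pzRingType) (n r : nat) (x : tensor_space R n r)
  : tensor_space R n r.+1 :=
  [ffun k : {ffun 'I_r.+1 -> 'I_n} => if val (k ord_max) == n.-1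
             then x [ffun i => k (widen_ord (leqnSn r) i)] else 0].

(* Main.v *)
Require Import Defs.
From mathcomp Require Import all_boot all_order all_algebra all_fingroup.
Local Open Scope ring_scope.
Import GRing.Theory.

Definition K0 (n r : nat) : {ffun 'I_r -> 'I_n.+1} := [ffun i : 'I_r => inord (nat_of_ord i)].

Lemma K0_cover n r (j : 'I_n.+1) : (j < r)%N -> exists i : 'I_r, K0 n r i = j.
Proof.
move=> H; exists (Ordinal H); rewrite ffunE /=; exact: inord_val.
Qed.

Lemma perm_eq_on n r (w w0 : 'S_n.+1) :
  [ffun i => (w^-1)%g (w0 (K0 n r i))] = K0 n r ->
  forall j : 'I_n.+1, (j < r)%N -> w0 j = w j.
Proof.
move=> E j /(K0_cover) [i <-].
have := congr1 (fun f : {ffun 'I_r -> 'I_n.+1} => f i) E; rewrite ffunE /= => E2.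
by rewrite -{2}E2 permKV.
Qed.

Theorem lemma4p1 (R : pzRingType) (n r : nat) (hn : (0 < n)%N) (hr : (0 < r)%N) :
  ((n <= r)%N ->
     forall a : {ffun 'S_n -> R},
       (forall x : tensor_space R n r, Phi a x = 0) -> a = 0)
  /\
  ((n <= r.+1)%N ->
     forall a : {ffun 'S_n -> R},
       (forall w : 'S_n, a w != 0 -> fixes_last w) ->
       (forall x : tensor_space R n r, Phi a (tensor_vn x) = 0) -> a = 0).
Proof.
case: n hn => // n _.
pose x : tensor_space R n.+1 r := [ffun k => (k == K0 n r)%:R].
have xK0 : forall w : 'S_n.+1, [ffun i => (w^-1)%g (w (K0 n r i))] = K0 n r.
  by move=> w; apply/ffunP => i; rewrite ffunE permK.
split.
- move=> Hnr a H; apply/ffunP => w0; rewrite ffunE.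
  have := congr1 (fun f : tensor_space R n.+1 r => f [ffun i => w0 (K0 n r i)]) (H x).
  rewrite !ffunE (bigD1 w0) //= big1 ?addr0.
    rewrite ffunE.
    have -> : [ffun i => (w0^-1)%g ([ffun i0 => w0 (K0 n r i0)] i)] = [ffun i => (w0^-1)%g (w0 (K0 n r i))].
      by apply/ffunP => i; rewrite !ffunE.
    by rewrite xK0 ?ffunE eqxx mulr1.
  move=> w Hw; rewrite !ffunE.
  case: eqP => [E|_]; last by rewrite mulr0.
  exfalso; move/eqP: Hw; apply; apply/permP => j.
  symmetry; apply: (@perm_eq_on n r w w0); last by apply: leq_trans (ltn_ord j) Hnr.
  by apply: etrans E; apply/ffunP => i; rewrite !ffunE.
- move=> Hnr a Hfix H; apply/ffunP => w0; rewrite ffunE.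
  have [->//|a0] := eqVneq (a w0) 0.
  have F0 := Hfix _ a0.
  pose k : {ffun 'I_r.+1 -> 'I_n.+1} :=
    [ffun i : 'I_r.+1 => if insub (val i) is Some i' then w0 (K0 n r i') else ord_max].
  have kmax : k ord_max = ord_max by rewrite ffunE insubF //= ltnn.
  have kw : forall i : 'I_r, k (widen_ord (leqnSn r) i) = w0 (K0 n r i).
    by move=> i; rewrite ffunE insubT //= => Hi; congr (w0 (K0 n r _)); apply: val_inj.
  clearbody k.
  have fixinv : forall w : 'S_n.+1, fixes_last w -> (w^-1)%g ord_max = ord_max.
    move=> w Fw; rewrite -{1}(Fw ord_max) //; exact: permK.
  have := congr1 (fun f : tensor_space R n.+1 r.+1 => f k) (H x).
  rewrite !ffunE (bigD1 w0) //= big1 ?addr0.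
    rewrite /perm_act /tensor_vn !ffunE kmax fixinv //= eqxx.
    have -> : [ffun i => [ffun i0 => (w0^-1)%g (k i0)] (widen_ord (leqnSn r) i)] = [ffun i => (w0^-1)%g (w0 (K0 n r i))].
      by apply: eq_ffun => i; rewrite ffunE kw.
    by rewrite xK0 ?ffunE eqxx mulr1.
  move=> w Hw; have [->|aw] := eqVneq (a w) 0; first by rewrite mul0r.
  have Fw := Hfix _ aw.
  rewrite /perm_act /tensor_vn !ffunE kmax fixinv //= eqxx ?ffunE.
  case: eqP => [E|_]; last by rewrite mulr0.
  exfalso; move/eqP: Hw; apply; apply/permP => j.
  have [jr|] := ltnP j r.
    symmetry; apply: (@perm_eq_on n r w w0) => //.
    by apply: etrans E; apply: eq_ffun => i; rewrite [in RHS]ffunE kw.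
  move=> jr; have jn : val j = n by have := ltn_ord j; rewrite ltnS => jn; apply/eqP; rewrite eqn_leq jn; exact: leq_trans (Hnr : (n <= r)%N) jr.
  by rewrite Fw // F0.
Qed.
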